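(* Assume $h,\tau$ are such that $\int_0^T\int_{\mathcal D}\tilde Q_{h\tau}(t)\,dx\,dt>0$, and let $\rho>0$. For $V\in\mathbb U_{h\tau}$ define $$\mu(V)=\frac{\max\big\{\int_0^T\int_{\mathcal D}\mathbb E[X_{h\tau}(V)]\,dx\,dt-\delta,\,0\big\}}{\rho\int_0^T\int_{\mathcal D}\tilde Q_{h\tau}(t)\,dx\,dt},\qquad \mathbb R_hV:=V-\rho\,\mu(V)\,\tilde M_{h\tau}.$$ Then for every $V\in\mathbb U_{h\tau}$, $$\mathbb E\big[[V-\mathbb R_hV,\,W-\mathbb R_hV]\big]\le0\qquad\forall W\in\mathbb U_{h\tau,\delta},$$ and for all $V,P\in\mathbb U_{h\tau}$, $$\int_0^T\mathbb E\|\mathbb R_hV(t)-\mathbb R_hP(t)\|^2dt\le\int_0^T\mathbb E\|V(t)-P(t)\|^2dt.$$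
   Context: Setting: $T>0$; complete probability space with $\mathbb F=\{\mathcal F_t\}$ the natural filtration of a one-dimensional standard Brownian motion $W_t$; $\mathcal D\subset\mathbb R^d$ ($d=1,2,3$) bounded with smooth boundary; $\|\cdot\|$ the $L^2(\mathcal D)$ norm; $[U,V]=\int_0^T\int_{\mathcal D}UV\,dx\,dt$. Data $\delta\in\mathbb R$, $X_0\in L^2(\mathcal D)$, $\sigma$ adapted square-integrable $L^2(\mathcal D)$-valued. Finite elements: regular triangulation with mesh size $h$; $\mathbb V_h^1$ continuous piecewise linears vanishing on $\partial\mathcal D$; $\Pi^1_h$ the $L^2$-projection onto $\mathbb V^1_h$; $\Delta_h$ with $(-\Delta_h\xi_h,\phi_h)=(\nabla\xi_h,\nabla\phi_h)$. Time grid $t_n=n\tau$, $\tau=T/N\le1$, $\Delta W_{n+1}=W_{t_{n+1}}-W_{t_n}$. $\mathbb U_{h\tau}$: $\mathbb F$-adapted square-integrable $\mathbb V^1_h$-valued processes with $U(t)=U(t_n)$ on $[t_n,t_{n+1})$. For $V\in\mathbb U_{h\tau}$, $X_{h\tau}(V)$ is defined by $X(t_{n+1})-X(t_n)=\tau[\Delta_hX(t_{n+1})+V(t_n)]+\Pi^1_h\sigma(t_n)\Delta W_{n+1}$, $X(0)=\Pi^1_hX_0$, and $X(t)=\mathbb E[X(t_{n+1})|\mathcal F_{t_n}]$ for $t\in(t_n,t_{n+1})$. $\mathbb U_{h\tau,\delta}=\{V\in\mathbb U_{h\tau}:\int_0^T\int_{\mathcal D}\mathbb E[X_{h\tau}(V)]dxdt\le\delta\}$.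 Deterministic functions: $\tilde M_{h\tau}$ ($\mathbb V^1_h$-valued, $\tilde M(t)=\tilde M(t_n)$ on $[t_n,t_{n+1})$) solves $\tilde M_{h\tau}(t_{n+1})-\tilde M_{h\tau}(t_n)=\tau[-\Delta_h\tilde M_{h\tau}(t_n)-\Pi^1_h1]$, $\tilde M_{h\tau}(T)=0$; $\tilde Q_{h\tau}$ ($\mathbb V^1_h$-valued, $\tilde Q(t)=\tilde Q(t_{n+1})$ on $(t_n,t_{n+1}]$) solves $\tilde Q_{h\tau}(t_{n+1})-\tilde Q_{h\tau}(t_n)=\tau[\Delta_h\tilde Q_{h\tau}(t_{n+1})+\tilde M_{h\tau}(t_n)]$, $\tilde Q_{h\tau}(0)=0$. *)

(* Defs.v *)
From HB Require Import structures.
From mathcomp Require Import all_boot all_order all_algebra.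
From mathcomp Require Import all_classical all_reals all_analysis.
From mathcomp Require Import normal_distribution.
Set Implicit Arguments. Unset Strict Implicit. Unset Printing Implicit Defensive.
Import Order.TTheory GRing.Theory Num.Theory.
Import numFieldNormedType.Exports.
Local Open Scope classical_set_scope.
Local Open Scope ring_scope.

(* Spatial discretisation: an element of V_h^1 is represented by its  *)
(* coefficient row vector u : 'rV_m w.r.t. the nodal basis (phi_i).    *)
(* Mss = mass matrix (phi_i,phi_j), Stf = stiffness matrix            *)
(* (grad phi_i, grad phi_j), bvec_i = \int_D phi_i dx.                 *)
Section spatial.
Context {R : realType} {m : nat}.

Definition l2ip (Mss : 'M[R]_m) (u v : 'rV[R]_m) : R := (u *m Mss *m v^T) 0 0.
Definition stiff (Stf : 'M[R]_m) (u v : 'rV[R]_m) : R := (u *m Stf *m v^T) 0 0.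
Definition intD (bvec : 'rV[R]_m) (u : 'rV[R]_m) : R := (u *m bvec^T) 0 0.

Definition sym_posdef (A : 'M[R]_m) : Prop :=
  A^T = A /\ forall v : 'rV[R]_m, v != 0 -> 0 < (v *m A *m v^T) 0 0.

Definition is_discrete_laplacian (Mss Stf : 'M[R]_m) (Lh : 'rV[R]_m -> 'rV[R]_m) :=
  forall u v, l2ip Mss (- Lh u) v = stiff Stf u v.

Definition is_proj_one (Mss : 'M[R]_m) (bvec : 'rV[R]_m) (Pi1 : 'rV[R]_m) :=
  forall v, l2ip Mss Pi1 v = intD bvec v.

End spatial.

Section proba.
Context {R : realType} {d : measure_display} {Omega : measurableType d}.
Variable P : probability Omega R.

Definition meas_wrt (G : set (set Omega)) (f : Omega -> R) : Prop :=
  forall B : set R, measurable B -> G (f @^-1` B).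

Definition gen_nat (W : R -> Omega -> R) (t : R) : set (set Omega) :=
  <<s setT, [set A | exists r (B : set R),
              [/\ 0 <= r, r <= t, measurable B & A = W r @^-1` B]] >>.

Definition natF (W : R -> Omega -> R) (t : R) : set (set Omega) :=
  [set A | measurable A /\ exists B, gen_nat W t B /\
            P.-negligible ((A `\` B) `|` (B `\` A))].

Definition indep_of (G : set (set Omega)) (Z : Omega -> R) : Prop :=
  forall A (B : set R), G A -> measurable B ->
    P (A `&` Z @^-1` B) = (P A * P (Z @^-1` B))%E.

Definition std_BM (W : R -> Omega -> R) : Prop :=
  [/\ (forall t, measurable_fun setT (W t)),
      (forall w, W 0 w = 0),
      (forall w, {within `[0, +oo[, continuous (fun t => W t w)}) &
      (forall s t, 0 <= s -> s < t ->
         (forall B : set R, measurable B ->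
            P ((fun w => W t w - W s w) @^-1` B) = normal_prob 0 (Num.sqrt (t - s)) B)
         /\ indep_of (gen_nat W s) (fun w => W t w - W s w))].

Definition cexp_version (G : set (set Omega)) (Z Y : Omega -> R) : Prop :=
  [/\ P.-integrable setT (EFin \o Z), meas_wrt G Y,
      P.-integrable setT (EFin \o Y) &
      forall A, G A -> (\int[P]_(x in A) (Y x)%:E = \int[P]_(x in A) (Z x)%:E)%E].

End proba.

(* Time-discrete processes: a process U in U_{h tau} (piecewise        *)
(* constant, U(t) = U(t_n) on [t_n,t_{n+1})) is represented by the     *)
(* sequence n |-> U(t_n), n = 0..N-1, of V_h^1-valued random vectors. *)
Section procs.
Context {R : realType} {d : measure_display} {Omega : measurableType d} {m : nat}.
Variable P : probability Omega R.

Definition proc := nat -> Omega -> 'rV[R]_m.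

Definition inU (N : nat) (F : nat -> set (set Omega)) (Mss : 'M[R]_m) (U : proc) :=
  forall n, (n < N)%N ->
    (forall i : 'I_m, meas_wrt (F n) (fun w => U n w 0 i)) /\
    P.-integrable setT (fun w => (l2ip Mss (U n w) (U n w))%:E).

Definition Evec (X : Omega -> 'rV[R]_m) : 'rV[R]_m :=
  \row_i (\int[P]_w (X w 0 i)).

Definition Ebr (N : nat) (tau : R) (Mss : 'M[R]_m) (A B : proc) : R :=
  \int[P]_w (\sum_(n < N) tau * l2ip Mss (A n w) (B n w)).

Definition Enorm2 (N : nat) (tau : R) (Mss : 'M[R]_m) (A : proc) : R :=
  \sum_(n < N) tau * \int[P]_w (l2ip Mss (A n w) (A n w)).

End procs.

(* Main.v *)
Require Import Defs.
From HB Require Import structures.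
From mathcomp Require Import all_boot all_order all_algebra.
From mathcomp Require Import all_classical all_reals all_analysis.
From mathcomp Require Import ring lra.
From mathcomp Require Import measurable_realfun.
Import Order.TTheory GRing.Theory Num.Theory.
Local Open Scope classical_set_scope.
Local Open Scope ring_scope.

Section alg.
Context {R : realType} {m : nat}.
Implicit Types (M : 'M[R]_m) (u v w : 'rV[R]_m).

Lemma l2ipDl M u v w : l2ip M (u + v) w = l2ip M u w + l2ip M v w.
Proof. by rewrite /l2ip !mulmxDl mxE. Qed.
Lemma l2ipDr M u v w : l2ip M u (v + w) = l2ip M u v + l2ip M u w.
Proof. by rewrite /l2ip linearD /= mulmxDr mxE. Qed.
Lemma l2ipZl M a u w : l2ip M (a *: u) w = a * l2ip M u w.
Proof. by rewrite /l2ip -!scalemxAl mxE. Qed.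
Lemma l2ipZr M a u w : l2ip M u (a *: w) = a * l2ip M u w.
Proof. by rewrite /l2ip linearZ /= -scalemxAr mxE. Qed.
Lemma l2ipNl M u w : l2ip M (- u) w = - l2ip M u w.
Proof. by rewrite -scaleN1r l2ipZl mulN1r. Qed.
Lemma l2ipNr M u w : l2ip M u (- w) = - l2ip M u w.
Proof. by rewrite -scaleN1r l2ipZr mulN1r. Qed.
Lemma l2ipBl M u v w : l2ip M (u - v) w = l2ip M u w - l2ip M v w.
Proof. by rewrite l2ipDl l2ipNl. Qed.
Lemma l2ipBr M u v w : l2ip M u (v - w) = l2ip M u v - l2ip M u w.
Proof. by rewrite l2ipDr l2ipNr. Qed.
Lemma l2ip0l M w : l2ip M 0 w = 0.
Proof. by rewrite /l2ip !mul0mx mxE. Qed.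
Lemma l2ip0r M w : l2ip M w 0 = 0.
Proof. by rewrite /l2ip trmx0 mulmx0 mxE. Qed.
Lemma l2ipC M u w : M^T = M -> l2ip M u w = l2ip M w u.
Proof.
move=> HM; rewrite /l2ip -[in LHS](trmxK (u *m M *m w^T)) mxE.
by rewrite !trmx_mul trmxK HM mulmxA.
Qed.
Lemma l2ip_ge0 M u : sym_posdef M -> 0 <= l2ip M u u.
Proof.
move=> [_ HM]; have [->|nz] := eqVneq u 0; first by rewrite l2ip0l.
exact/ltW/HM.
Qed.
Lemma l2ip_eq0 M u : sym_posdef M -> l2ip M u u = 0 -> u = 0.
Proof.
move=> [_ HM] h; apply/eqP; apply/negPn/negP => nz.
by have := HM u nz; rewrite /l2ip in h; rewrite h ltxx.
Qed.

Lemma stiffDl S u v w : stiff S (u + v) w = stiff S u w + stiff S v w.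
Proof. by rewrite /stiff !mulmxDl mxE. Qed.
Lemma stiffNl S u w : stiff S (- u) w = - stiff S u w.
Proof. by rewrite /stiff !mulNmx mxE. Qed.
Lemma stiffC S u w : S^T = S -> stiff S u w = stiff S w u.
Proof.
move=> HM; rewrite /stiff -[in LHS](trmxK (u *m S *m w^T)) mxE.
by rewrite !trmx_mul trmxK HM mulmxA.
Qed.

Lemma posdef_unit M : sym_posdef M -> M \in unitmx.
Proof.
move=> [_ HM]; rewrite unitmxE unitfE; apply/negP => /det0P [v nz vM].
by have := HM v nz; rewrite vM mul0mx mxE ltxx.
Qed.

Definition ucomp M (i : 'I_m) : 'rV[R]_m := delta_mx 0 i *m invmx M.

Lemma l2ip_ucomp M i v : sym_posdef M -> l2ip M v (ucomp M i) = v 0 i.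
Proof.
move=> HM; rewrite /l2ip /ucomp trmx_mul trmx_inv HM.1 -mulmxA (mulmxA M).
rewrite mulmxV ?posdef_unit // mul1mx trmx_delta -colE mxE //.
Qed.

Lemma comp_bound M i v : sym_posdef M ->
  `|v 0 i| <= (l2ip M v v + l2ip M (ucomp M i) (ucomp M i)) / 2.
Proof.
move=> HM; rewrite -(l2ip_ucomp M i v HM).
have h1 := l2ip_ge0 M (v - ucomp M i) HM.
have h2 := l2ip_ge0 M (v + ucomp M i) HM.
rewrite !(l2ipBl, l2ipBr, l2ipDl, l2ipDr) in h1 h2.
rewrite (l2ipC M (ucomp M i) v HM.1) in h1 h2.
rewrite ler_norml; apply/andP; split; lra.
Qed.

Lemma l2ip_bound M v w : sym_posdef M ->
  `|l2ip M v w| <= (l2ip M v v + l2ip M w w) / 2.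
Proof.
move=> HM.
have h1 := l2ip_ge0 M (v - w) HM.
have h2 := l2ip_ge0 M (v + w) HM.
rewrite !(l2ipBl, l2ipBr, l2ipDl, l2ipDr) in h1 h2.
rewrite (l2ipC M w v HM.1) in h1 h2.
rewrite ler_norml; apply/andP; split; lra.
Qed.

Lemma qB_bound M v w : sym_posdef M ->
  l2ip M (v - w) (v - w) <= 2 * l2ip M v v + 2 * l2ip M w w.
Proof.
move=> HM.
have h2 := l2ip_ge0 M (v + w) HM.
rewrite !(l2ipBl, l2ipBr, l2ipDl, l2ipDr) in h2 *.
rewrite (l2ipC M w v HM.1) in h2 *; lra.
Qed.

Lemma l2ip_col M A v : l2ip M A v = (v *m (A *m M)^T) 0 0.
Proof. by rewrite /l2ip -[in LHS](trmxK (A *m M *m v^T)) mxE trmx_mul trmxK. Qed.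

Variables (Mss Stf : 'M[R]_m) (HMss : sym_posdef Mss) (HStf : sym_posdef Stf).
Variable Lh : 'rV[R]_m -> 'rV[R]_m.
Hypothesis HLh : is_discrete_laplacian Mss Stf Lh.

Lemma LhB u v : Lh u - Lh v = Lh (u - v).
Proof.
set z := Lh u - Lh v - Lh (u - v).
have h : forall y, l2ip Mss z y = 0.
  move=> y; rewrite /z !l2ipBl.
  have e : forall x, l2ip Mss (Lh x) y = - stiff Stf x y.
    by move=> x; rewrite -HLh l2ipNl opprK.
  by rewrite !e stiffDl stiffNl; ring.
by apply/eqP; rewrite -subr_eq0; apply/eqP; apply: (@l2ip_eq0 Mss _ HMss); exact: h.
Qed.

Lemma Lh_sa u v : l2ip Mss (Lh u) v = l2ip Mss u (Lh v).
Proof.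
have e : forall x y, l2ip Mss (Lh x) y = - stiff Stf x y.
  by move=> x y; rewrite -HLh l2ipNl opprK.
rewrite e (l2ipC _ _ _ HMss.1) e; congr (- _); exact: stiffC HStf.1.
Qed.


Lemma duality (N : nat) (tau : R) (bvec Pi1 : 'rV[R]_m)
  (HPi1 : is_proj_one Mss bvec Pi1) (Mt e g : nat -> 'rV[R]_m) :
  Mt N = 0 -> (forall n, (n < N)%N -> Mt n.+1 - Mt n = tau *: (- Lh (Mt n) - Pi1)) ->
  e 0%N = 0 -> (forall n, (n < N)%N -> e n.+1 - e n = tau *: (Lh (e n.+1) + g n)) ->
  \sum_(n < N) tau * intD bvec (e n.+1) = \sum_(n < N) tau * l2ip Mss (Mt n) (g n).
Proof.
move=> HMN HMt He0 He.
pose f := fun n => l2ip Mss (Mt n) (e n).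
have key : forall n, (n < N)%N ->
    tau * intD bvec (e n.+1) = (f n - f n.+1) + tau * l2ip Mss (Mt n) (g n).
  move=> n hn.
  have HM' : Mt n.+1 = Mt n + tau *: (- Lh (Mt n) - Pi1).
    by rewrite -HMt // addrC subrK.
  have He' : e n.+1 = e n + tau *: (Lh (e n.+1) + g n).
    by rewrite -He // addrC subrK.
  have E1 : l2ip Mss (Mt n.+1) (e n.+1) = l2ip Mss (Mt n) (e n.+1)
      - tau * l2ip Mss (Lh (Mt n)) (e n.+1) - tau * l2ip Mss Pi1 (e n.+1).
    by rewrite HM' l2ipDl l2ipZl l2ipBl l2ipNl; ring.
  have E2 : l2ip Mss (Mt n) (e n.+1) = l2ip Mss (Mt n) (e n)
      + tau * l2ip Mss (Mt n) (Lh (e n.+1)) + tau * l2ip Mss (Mt n) (g n).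
    by rewrite {1}He' l2ipDr l2ipZr l2ipDr; ring.
  rewrite /f E1 Lh_sa -HPi1 E2; ring.
rewrite (eq_bigr (fun n : 'I_N => (f n - f n.+1) + tau * l2ip Mss (Mt n) (g n)));
  last by move=> [n hn] _; apply: key.
rewrite big_split /=.
have -> : \sum_(n < N) (f n - f n.+1) = 0.
  rewrite (eq_bigr (fun n : 'I_N => - (f n.+1 - f n))); last by move=> i _; rewrite opprB.
  rewrite sumrN -(big_mkord xpredT (fun n => f n.+1 - f n)) telescope_sumr //.
  by rewrite /f HMN He0 l2ip0l l2ip0r subrr oppr0.
by rewrite add0r.
Qed.

End alg.

Section prob.
Context {R : realType} {d : measure_display} {Omega : measurableType d}.
Variable P : probability Omega R.

Definition Int (f : Omega -> R) := P.-integrable setT (EFin \o f).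

Lemma Int_ext f g : Int f -> (forall w, f w = g w) -> Int g.
Proof.
move=> hf e; apply: (eq_integrable measurableT (EFin \o f)) => //.
by move=> w _ /=; rewrite e.
Qed.

Lemma Int_cst k : Int (fun _ => k).
Proof. exact: finite_measure_integrable_cst. Qed.

Lemma IntD f g : Int f -> Int g -> Int (fun w => f w + g w).
Proof.
move=> hf hg; apply: (eq_integrable measurableT _ _ _ (integrableD measurableT hf hg)) => //.
Qed.

Lemma IntN f : Int f -> Int (fun w => - f w).
Proof. by move=> hf; apply: (eq_integrable measurableT _ _ _ (integrableN hf)). Qed.

Lemma IntB f g : Int f -> Int g -> Int (fun w => f w - g w).
Proof. by move=> hf hg; apply: IntD => //; apply: IntN. Qed.

Lemma IntZ k f : Int f -> Int (fun w => k * f w).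
Proof. by move=> hf; apply: (eq_integrable measurableT _ _ _ (integrableZl measurableT k hf)). Qed.

Lemma IntZr k f : Int f -> Int (fun w => f w * k).
Proof. by move=> hf; apply: (Int_ext _ _ (IntZ k f hf)) => w /=; rewrite mulrC. Qed.

Lemma Int_sum I (s : seq I) (f : I -> Omega -> R) :
  (forall i, Int (f i)) -> Int (fun w => \sum_(i <- s) f i w).
Proof.
move=> hf; elim: s => [|a s ih].
  by apply: (Int_ext _ _ (Int_cst 0)) => w; rewrite big_nil.
by apply: (Int_ext _ _ (IntD _ _ (hf a) ih)) => w; rewrite big_cons.
Qed.

Lemma Rint_cst k : \int[P]_w k = k.
Proof.
rewrite Rintegral_cst //.
rewrite [X in _ * fine X](_ : _ = 1%E); first by rewrite /= mulr1.
exact: probability_setT.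
Qed.

Lemma RintD f g : Int f -> Int g ->
  \int[P]_w (f w + g w) = \int[P]_w f w + \int[P]_w g w.
Proof. by move=> hf hg; rewrite RintegralD. Qed.

Lemma RintB f g : Int f -> Int g ->
  \int[P]_w (f w - g w) = \int[P]_w f w - \int[P]_w g w.
Proof. by move=> hf hg; rewrite RintegralB. Qed.

Lemma RintZ k f : Int f -> \int[P]_w (k * f w) = k * \int[P]_w f w.
Proof. by move=> hf; rewrite RintegralZl. Qed.

Lemma RintZr k f : Int f -> \int[P]_w (f w * k) = \int[P]_w f w * k.
Proof. by move=> hf; rewrite RintegralZr. Qed.

Lemma Rint_sum I (s : seq I) (f : I -> Omega -> R) :
  (forall i, Int (f i)) ->
  \int[P]_w (\sum_(i <- s) f i w) = \sum_(i <- s) \int[P]_w f i w.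
Proof.
move=> hf; elim: s => [|a s ih].
  rewrite big_nil -[RHS](Rint_cst 0); apply: eq_Rintegral => w _; by rewrite big_nil.
rewrite big_cons -ih -RintD //; last exact: Int_sum.
by apply: eq_Rintegral => w _; rewrite big_cons.
Qed.

Lemma Int_le (f g : Omega -> R) : measurable_fun setT f ->
  (forall w, `|f w| <= g w) -> Int g -> Int f.
Proof.
move=> mf hfg hg; apply: (le_integrable measurableT _ _ hg) => //.
  exact/measurable_EFinP.
move=> w _ /=; rewrite lee_fin (le_trans (hfg w)) //.
exact: ler_norm.
Qed.


Section vec.
Context {m : nat}.
Implicit Types X Y : Omega -> 'rV[R]_m.

Definition icomp X := forall i : 'I_m, Int (fun w => X w 0 i).

Lemma icompD X Y : icomp X -> icomp Y -> icomp (fun w => X w + Y w).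
Proof. move=> hX hY i; apply: (Int_ext _ _ (IntD _ _ (hX i) (hY i))) => w; by rewrite mxE. Qed.
Lemma icompB X Y : icomp X -> icomp Y -> icomp (fun w => X w - Y w).
Proof. move=> hX hY i; apply: (Int_ext _ _ (IntB _ _ (hX i) (hY i))) => w; by rewrite !mxE. Qed.
Lemma icompZ k X : icomp X -> icomp (fun w => k *: X w).
Proof. move=> hX i; apply: (Int_ext _ _ (IntZ k _ (hX i))) => w; by rewrite !mxE. Qed.
Lemma icomp_cst (c : 'rV[R]_m) : icomp (fun _ => c).
Proof. move=> i; exact: Int_cst. Qed.

Lemma Int_lin X (c : 'cV[R]_m) : icomp X -> Int (fun w => (X w *m c) 0 0).
Proof.
move=> hX; apply: (Int_ext (fun w => \sum_(j <- index_enum 'I_m) X w 0 j * c j 0)).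
  by apply: Int_sum => j; apply: IntZr.
by move=> w; rewrite mxE.
Qed.

Lemma Rint_lin X (c : 'cV[R]_m) : icomp X ->
  \int[P]_w ((X w *m c) 0 0) = (Evec P X *m c) 0 0.
Proof.
move=> hX; rewrite mxE.
rewrite (eq_Rintegral _ (g := fun w => \sum_j X w 0 j * c j 0)); last first.
  by move=> w _; rewrite mxE.
rewrite Rint_sum; last by move=> j; apply: IntZr.
by apply: eq_bigr => j _; rewrite RintZr // mxE.
Qed.

Lemma Int_l2ip M A X : icomp X -> Int (fun w => l2ip M A (X w)).
Proof. move=> hX; apply: (Int_ext _ _ (Int_lin _ ((A *m M)^T) hX)) => w; by rewrite l2ip_col. Qed.

Lemma Rint_l2ip M A X : icomp X -> \int[P]_w (l2ip M A (X w)) = l2ip M A (Evec P X).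
Proof.
move=> hX; rewrite l2ip_col -Rint_lin //; apply: eq_Rintegral => w _; by rewrite l2ip_col.
Qed.

Lemma Int_intD b X : icomp X -> Int (fun w => intD b (X w)).
Proof. move=> hX; exact: (Int_lin _ (b^T) hX). Qed.

Lemma Rint_intD b X : icomp X -> \int[P]_w (intD b (X w)) = intD b (Evec P X).
Proof. move=> hX; exact: (Rint_lin _ (b^T) hX). Qed.

Lemma EvecB X Y : icomp X -> icomp Y ->
  Evec P (fun w => X w - Y w) = Evec P X - Evec P Y.
Proof.
move=> hX hY; apply/rowP => i; rewrite !mxE -RintB //.
by apply: eq_Rintegral => w _; rewrite !mxE.
Qed.

Lemma EvecD X Y : icomp X -> icomp Y ->
  Evec P (fun w => X w + Y w) = Evec P X + Evec P Y.
Proof.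
move=> hX hY; apply/rowP => i; rewrite !mxE -RintD //.
by apply: eq_Rintegral => w _; rewrite !mxE.
Qed.

Lemma Evec_cst (c : 'rV[R]_m) : Evec P (fun _ => c) = c.
Proof. by apply/rowP => i; rewrite mxE Rint_cst. Qed.

Lemma l2ipE M (u v : 'rV[R]_m) :
  l2ip M u v = \sum_j v 0 j * \sum_i u 0 i * M i j.
Proof.
rewrite l2ip_col mxE; apply: eq_bigr => j _; rewrite !mxE; congr (_ * _).
Qed.

Definition mcomp X := forall i : 'I_m, measurable_fun setT (fun w => X w 0 i).

Lemma meas_l2ip M X Y : mcomp X -> mcomp Y ->
  measurable_fun setT (fun w => l2ip M (X w) (Y w)).
Proof.
move=> hX hY.
rewrite (_ : (fun w => l2ip M (X w) (Y w)) =
   (fun w => \sum_(j <- index_enum 'I_m) Y w 0 j *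
       \sum_(i <- index_enum 'I_m) X w 0 i * M i j)); last first.
  by apply: funext => w; rewrite l2ipE.
apply: measurable_sum => j; apply: measurable_funM => //.
apply: measurable_sum => i; apply: measurable_funM => //.
Qed.

Lemma mcompB X Y : mcomp X -> mcomp Y -> mcomp (fun w => X w - Y w).
Proof.
move=> hX hY i.
rewrite (_ : (fun w => (X w - Y w) 0 i) = (fun w => X w 0 i - Y w 0 i)).
  exact: measurable_funB.
by apply: funext => w; rewrite !mxE.
Qed.

Lemma icomp_of M X : sym_posdef M -> mcomp X ->
  Int (fun w => l2ip M (X w) (X w)) -> icomp X.
Proof.
move=> HM hX hq i.
apply: (Int_le _ (fun w => (l2ip M (X w) (X w) + l2ip M (ucomp M i) (ucomp M i)) / 2)).
- exact: hX.
- by move=> w; apply: comp_bound.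
- by apply: IntZr; apply: IntD => //; apply: Int_cst.
Qed.

End vec.
End prob.

Lemma max_ineq {R : realType} (x y dl : R) :
  (Num.max (x - dl) 0 - Num.max (y - dl) 0) ^+ 2 <=
  (Num.max (x - dl) 0 - Num.max (y - dl) 0) * (x - y).
Proof.
have [h1|h1] := leP (x - dl) 0; have [h2|h2] := leP (y - dl) 0;
  rewrite ?(max_r h1) ?(max_r h2) ?(max_l (ltW h1)) ?(max_l (ltW h2)); nra.
Qed.

Lemma natF_setT {R : realType} {d : measure_display} {Omega : measurableType d}
  (P : probability Omega R) W t : natF P W t setT.
Proof.
split; first exact: measurableT.
exists setT; split.
  move=> M [[M0 MD _] _]; rewrite -(setD0 setT); exact: MD.
rewrite setDv setU0; exact: negligible_set0.
Qed.

Theorem mainTheorem8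
  (R : realType) (d : measure_display) (Omega : measurableType d)
  (P : probability Omega R)
  (* Brownian motion and its natural filtration *)
  (W : R -> Omega -> R) (HW : std_BM P W)
  (* time discretisation *)
  (T : R) (N : nat) (HT : 0 < T) (HN : (0 < N)%N)
  (Htau : T / N%:R <= 1)
  (* finite element space V_h^1 (dimension m), mass / stiffness data *)
  (m : nat) (Mss Stf : 'M[R]_m) (bvec : 'rV[R]_m)
  (HMss : sym_posdef Mss) (HStf : sym_posdef Stf)
  (Lh : 'rV[R]_m -> 'rV[R]_m) (HLh : is_discrete_laplacian Mss Stf Lh)
  (Pi1 : 'rV[R]_m) (HPi1 : is_proj_one Mss bvec Pi1)
  (* data: delta, Pi_h X_0, Pi_h sigma(t_n) *)
  (delta : R) (X0h : 'rV[R]_m) (sig : @proc R d Omega m)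
  (Hsig : inU P N (fun n => natF P W (n%:R * (T / N%:R))) Mss sig)
  (* the discrete state X_{h tau}(V): values at grid points ... *)
  (Xs : @proc R d Omega m -> @proc R d Omega m)
  (HXs : forall V, inU P N (fun n => natF P W (n%:R * (T / N%:R))) Mss V ->
     (forall w, Xs V 0%N w = X0h) /\
     forall n, (n < N)%N -> forall w,
       Xs V n.+1 w - Xs V n w =
         (T / N%:R) *: (Lh (Xs V n.+1 w) + V n w)
         + (W (n.+1%:R * (T / N%:R)) w - W (n%:R * (T / N%:R)) w) *: sig n w)
  (* ... and on (t_n, t_{n+1}): X(t) = E[X(t_{n+1}) | F_{t_n}] *)
  (Xmid : @proc R d Omega m -> @proc R d Omega m)
  (HXmid : forall V, inU P N (fun n => natF P W (n%:R * (T / N%:R))) Mss V ->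
     forall n, (n < N)%N -> forall i : 'I_m,
       cexp_version P (natF P W (n%:R * (T / N%:R)))
         (fun w => Xs V n.+1 w 0 i) (fun w => Xmid V n w 0 i))
  (* deterministic functions M~ and Q~ *)
  (Mt Qt : nat -> 'rV[R]_m)
  (HMtN : Mt N = 0)
  (HMt : forall n, (n < N)%N ->
     Mt n.+1 - Mt n = (T / N%:R) *: (- Lh (Mt n) - Pi1))
  (HQt0 : Qt 0%N = 0)
  (HQt : forall n, (n < N)%N ->
     Qt n.+1 - Qt n = (T / N%:R) *: (Lh (Qt n.+1) + Mt n))
  (HQpos : 0 < \sum_(n < N) (T / N%:R) * intD bvec (Qt n.+1))
  (rho : R) (Hrho : 0 < rho) :
  let tau := T / N%:R in
  let F := fun n : nat => natF P W (n%:R * tau) in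
  let U := inU P N F Mss in
  (* \int_0^T \int_D E[X_{h tau}(V)] dx dt *)
  let J := fun V : @proc R d Omega m =>
             \sum_(n < N) tau * intD bvec (Evec P (Xmid V n)) in
  let Udelta := fun V => U V /\ J V <= delta in
  let intQ := \sum_(n < N) tau * intD bvec (Qt n.+1) in
  let mu := fun V => Num.max (J V - delta) 0 / (rho * intQ) in
  let Rh := fun V : @proc R d Omega m =>
              (fun n w => V n w - (rho * mu V) *: Mt n) : @proc R d Omega m in
  (forall V Wc, U V -> Udelta Wc ->
     Ebr P N tau Mss (fun n w => V n w - Rh V n w)
                     (fun n w => Wc n w - Rh V n w) <= 0)
  /\
  (forall V Q, U V -> U Q ->
     Enorm2 P N tau Mss (fun n w => Rh V n w - Rh Q n w)
     <= Enorm2 P N tau Mss (fun n w => V n w - Q n w)).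
Proof.
move=> tau F U J Udelta intQ mu Rh.
rewrite -/tau in HXs HMt HQt HQpos HXmid.
have meas_of : forall (t : R) (f : Omega -> R), meas_wrt (natF P W t) f -> measurable_fun setT f.
  by move=> t f hf _ B mB; rewrite setTI; have [] := hf B mB.
have hU : forall V, U V -> forall n, (n < N)%N ->
    [/\ mcomp (V n), icomp P (V n) & Int P (fun w => l2ip Mss (V n w) (V n w))].
  move=> V hV n hn; have [hm hi] := hV n hn.
  have mc : mcomp (V n) by move=> i; exact: meas_of (hm i).
  by split => //; exact: (icomp_of P Mss (V n) HMss mc hi).
have hXs : forall V, U V -> forall n, (n < N)%N ->
    icomp P (Xs V n.+1) /\ Evec P (Xmid V n) = Evec P (Xs V n.+1).
  move=> V hV n hn; split.
    by move=> i; have [] := HXmid V hV n hn i.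
  apply/rowP => i; rewrite !mxE.
  have [_ _ _ h] := HXmid V hV n hn i.
  by rewrite /Rintegral h //; exact: natF_setT.
have Jdiff : forall V V', U V -> U V' ->
   J V - J V' = \sum_(n < N) tau * l2ip Mss (Mt n) (Evec P (V n) - Evec P (V' n)).
  move=> V V' hV hV'.
  have [hX0 hXr] := HXs V hV; have [hX0' hXr'] := HXs V' hV'.
  pose D := fun n w => Xs V n w - Xs V' n w.
  have step1 : J V - J V' = \sum_(n < N) tau * \int[P]_w intD bvec (D n.+1 w).
    rewrite /J -sumrB; apply: eq_bigr => -[n hn] _ /=.
    have [i1 e1] := hXs V hV n hn; have [i2 e2] := hXs V' hV' n hn.
    rewrite e1 e2 -mulrBr Rint_intD; last by rewrite /D; exact: icompB.
    by rewrite /D EvecB // /intD mulmxBl !mxE.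
  have iD : forall n : 'I_N, icomp P (D n.+1).
    move=> [n hn]; apply: icompB.
      exact: (hXs V hV n hn).1.
    exact: (hXs V' hV' n hn).1.
  rewrite step1.
  have -> : \sum_(n < N) tau * \int[P]_w intD bvec (D n.+1 w) =
      \sum_(n < N) \int[P]_w (tau * intD bvec (D n.+1 w)).
    by apply: eq_bigr => n _; rewrite RintZ //; apply: Int_intD.
  rewrite -Rint_sum; last by move=> n; apply: IntZ; apply: Int_intD.
  rewrite (eq_Rintegral _ (g := fun w => \sum_(n < N) tau * l2ip Mss (Mt n) (V n w - V' n w))); last first.
    move=> w _.
    apply: (@duality _ _ Mss Stf HMss HStf Lh HLh N tau bvec Pi1 HPi1 Mt
      (fun n => D n w) (fun n => V n w - V' n w) HMtN HMt).
      by rewrite /D hX0 hX0' subrr.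
    move=> n hn; rewrite /D -(LhB _ _ HMss _ HLh).
    apply/rowP => i.
    have h1 := congr1 (fun z : 'rV[R]_m => z 0 i) (hXr n hn w).
    have h2 := congr1 (fun z : 'rV[R]_m => z 0 i) (hXr' n hn w).
    rewrite /= !mxE in h1 h2; rewrite !mxE; lra.
  rewrite Rint_sum; last first.
    move=> [n hn]; apply: IntZ; apply: Int_l2ip; apply: icompB.
      by have [] := hU V hV n hn.
    by have [] := hU V' hV' n hn.
  apply: eq_bigr => -[n hn] _ /=.
  have [_ iV _] := hU V hV n hn; have [_ iV' _] := hU V' hV' n hn.
  have iB := icompB P _ _ iV iV'.
  rewrite RintZ; last exact: (Int_l2ip P Mss (Mt n) _ iB).
  by rewrite (Rint_l2ip P Mss (Mt n) _ iB) EvecB.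
have hK : intQ = \sum_(n < N) tau * l2ip Mss (Mt n) (Mt n).
  exact: (@duality _ _ Mss Stf HMss HStf Lh HLh N tau bvec Pi1 HPi1 Mt Qt Mt
     HMtN HMt HQt0 HQt).
have Kpos : 0 < intQ := HQpos.
have kE : forall V, (rho * mu V) * intQ = Num.max (J V - delta) 0.
  move=> V; rewrite /mu; field.
  by apply/andP; split; apply: lt0r_neq0.
have k0 : forall V, 0 <= rho * mu V.
  move=> V; rewrite /mu; apply: mulr_ge0; first exact: ltW.
  by apply: divr_ge0; [rewrite le_max lexx orbT | apply: mulr_ge0; apply: ltW].
split.
- move=> V Wc hV [hW hJW].
  have kK := kE V; have kp := k0 V.
  move: kK kp; set k := rho * mu V => kK kp.
  have -> : Ebr P N tau Mss (fun n w => V n w - Rh V n w) (fun n w => Wc n w - Rh V n w)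
     = \sum_(n < N) tau * (k * l2ip Mss (Mt n) (Evec P (Wc n) - Evec P (V n))
                           + k * k * l2ip Mss (Mt n) (Mt n)).
    rewrite /Ebr.
    rewrite (eq_Rintegral _ (g := fun w => \sum_(n < N) (tau * k) *
        l2ip Mss (Mt n) (Wc n w - V n w + k *: Mt n))); last first.
      move=> w _; apply: eq_bigr => n _.
      have -> : V n w - Rh V n w = k *: Mt n.
        by apply/rowP => i; rewrite /Rh -/k !mxE; ring.
      have -> : Wc n w - Rh V n w = Wc n w - V n w + k *: Mt n.
        by apply/rowP => i; rewrite /Rh -/k !mxE; ring.
      by rewrite l2ipZl mulrA.
    have ic : forall n : 'I_N, icomp P (fun w => Wc n w - V n w + k *: Mt n).
      move=> [n hn]; have [_ iW _] := hU Wc hW n hn; have [_ iV _] := hU V hV n hn.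
      apply: (icompD P (fun w => Wc n w - V n w) (fun _ => k *: Mt n)).
        exact: icompB.
      exact: icomp_cst.
    rewrite Rint_sum; last by move=> n; apply: IntZ; apply: Int_l2ip; apply: ic.
    apply: eq_bigr => -[n hn] _ /=.
    have [_ iW _] := hU Wc hW n hn; have [_ iV _] := hU V hV n hn.
    rewrite RintZ; last exact: (Int_l2ip P Mss (Mt n) _ (ic (Ordinal hn))).
    rewrite (Rint_l2ip P Mss (Mt n) _ (ic (Ordinal hn))) /=.
    rewrite (EvecD P (fun w => Wc n w - V n w) (fun _ => k *: Mt n)); last first.
        exact: icomp_cst.
      exact: icompB.
    rewrite EvecB // Evec_cst l2ipDr l2ipZr; ring.
  have -> : \sum_(n < N) tau * (k * l2ip Mss (Mt n) (Evec P (Wc n) - Evec P (V n))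
                           + k * k * l2ip Mss (Mt n) (Mt n)) =
     k * (\sum_(n < N) tau * l2ip Mss (Mt n) (Evec P (Wc n) - Evec P (V n)))
     + k * k * (\sum_(n < N) tau * l2ip Mss (Mt n) (Mt n)).
    by rewrite !mulr_sumr -big_split /=; apply: eq_bigr => n _; ring.
  rewrite -Jdiff // -hK.
  have [h|h] := leP (J V - delta) 0.
    move: kK; rewrite (max_r h) => /eqP; rewrite mulf_eq0 (gt_eqF Kpos) orbF.
    by move=> /eqP ->; rewrite !mul0r add0r.
  move: kK; rewrite (max_l (ltW h)) => kK.
  rewrite -(mulrA k k) kK; nra.
- move=> V Q hV hQ.
  have kKV := kE V; have kKQ := kE Q.
  move: kKV kKQ; set kV := rho * mu V; set kQ := rho * mu Q => kKV kKQ.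
  set c := kV - kQ.
  rewrite /Enorm2.
  have -> : \sum_(n < N) tau * \int[P]_w l2ip Mss (Rh V n w - Rh Q n w) (Rh V n w - Rh Q n w)
    = \sum_(n < N) tau * (\int[P]_w l2ip Mss (V n w - Q n w) (V n w - Q n w)
         - 2 * c * l2ip Mss (Mt n) (Evec P (V n) - Evec P (Q n))
         + c * c * l2ip Mss (Mt n) (Mt n)).
    apply: eq_bigr => -[n hn] _ /=; congr (tau * _).
    have [mV iV qV] := hU V hV n hn; have [mQ iQ qQ] := hU Q hQ n hn.
    have iB := icompB P _ _ iV iQ.
    have qD : Int P (fun w => l2ip Mss (V n w - Q n w) (V n w - Q n w)).
      apply: (Int_le P _ (fun w => 2 * l2ip Mss (V n w) (V n w) + 2 * l2ip Mss (Q n w) (Q n w))).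
      - by apply: meas_l2ip; apply: mcompB.
      - move=> w; rewrite ger0_norm; last exact: l2ip_ge0.
        exact: qB_bound.
      - by apply: IntD; apply: IntZ.
    rewrite (eq_Rintegral _ (g := fun w => l2ip Mss (V n w - Q n w) (V n w - Q n w)
       - (2 * c) * l2ip Mss (Mt n) (V n w - Q n w) + c * c * l2ip Mss (Mt n) (Mt n))); last first.
      move=> w _.
      have -> : Rh V n w - Rh Q n w = (V n w - Q n w) - c *: Mt n.
        by apply/rowP => i; rewrite /Rh -/kV -/kQ /c !mxE; ring.
      move: (V n w - Q n w) => x.
      rewrite !(l2ipBl, l2ipBr, l2ipZl, l2ipZr) (l2ipC Mss x (Mt n) HMss.1); ring.
    have iL := Int_l2ip P Mss (Mt n) _ iB.
    rewrite RintD; [| by apply: IntB => //; apply: IntZ | exact: Int_cst].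
    rewrite RintB //; last by apply: IntZ.
    by rewrite RintZ // Rint_cst (Rint_l2ip P Mss (Mt n) _ iB) EvecB.
  have -> : \sum_(n < N) tau * (\int[P]_w l2ip Mss (V n w - Q n w) (V n w - Q n w)
         - 2 * c * l2ip Mss (Mt n) (Evec P (V n) - Evec P (Q n))
         + c * c * l2ip Mss (Mt n) (Mt n)) =
     \sum_(n < N) tau * \int[P]_w l2ip Mss (V n w - Q n w) (V n w - Q n w)
     - 2 * c * (\sum_(n < N) tau * l2ip Mss (Mt n) (Evec P (V n) - Evec P (Q n)))
     + c * c * (\sum_(n < N) tau * l2ip Mss (Mt n) (Mt n)).
    rewrite !mulr_sumr -sumrB -big_split /=; apply: eq_bigr => n _; ring.
  rewrite -Jdiff // -hK.
  have hm := max_ineq (J V) (J Q) delta.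
  have cK : c * intQ = Num.max (J V - delta) 0 - Num.max (J Q - delta) 0.
    by rewrite /c mulrBl kKV kKQ.
  move: hm cK; set e := _ - _ => hm cK.
  move: hm cK; set x := J V - J Q => hm cK.
  rewrite -/x.
  have : c * c * intQ - 2 * c * x <= 0.
    nra.
  lra.
Qed.
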